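(* Let $m$ be a positive integer with $\omega(m)\geq 149$. Then $W(m)<m^{1/8}$.
   Context: For a positive integer $m$, $\omega(m)$ is the number of distinct prime divisors of $m$ and $W(m)=2^{\omega(m)}$. *)

(* Defs.v *)
From mathcomp Require Import all_boot.
From Stdlib Require Import Reals.

Definition omega (m : nat) : nat := size (primes m).
Definition W (m : nat) : nat := 2 ^ omega m.

(* Main.v *)
Require Import Defs.
From mathcomp Require Import all_boot.
From Stdlib Require Import Reals.
From Stdlib Require ZArith Lia Lra.
From mathcomp Require Import zify.

Lemma c1 : \sum_(0 <= i < 860 | prime i) 1 = 149.
Proof. rewrite unlock. vm_compute. reflexivity. Qed.

Lemma zprod (r : seq nat) (P : pred nat) :
  Z.of_nat (\prod_(i <- r | P i) i) = \big[Z.mul/1%Z]_(i <- r | P i) Z.of_nat i.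
Proof. apply: (big_morph Z.of_nat) => // x y; rewrite -multE; apply: Znat.Nat2Z.inj_mul. Qed.

Lemma zexp a n : Z.of_nat (expn a n) = Z.pow (Z.of_nat a) (Z.of_nat n).
Proof. elim: n => [|n IH] //. rewrite expnS -multE Znat.Nat2Z.inj_mul IH Znat.Nat2Z.inj_succ BinInt.Z.pow_succ_r;
  [by [] | apply: Znat.Nat2Z.is_nonneg]. Qed.

Lemma c2 : expn 256 149 < \prod_(0 <= i < 860 | prime i) i.
Proof.
apply/ltP; apply/Znat.Nat2Z.inj_lt. rewrite zprod zexp. rewrite unlock. vm_compute. reflexivity. Qed.

Lemma pE a n : Nat.pow a n = expn a n.
Proof. elim: n => [|n IH] //=. by rewrite expnS IH. Qed.

Lemma prod_primes_dvd m : 0 < m -> \prod_(p <- primes m) p %| m.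
Proof.
move=> m0; rewrite {2}(prod_prime_decomp m0) prime_decompE big_map /=.
rewrite big_seq [X in _ %| X]big_seq.
apply: (big_ind2 (fun a b => a %| b)) => //; first by move=> *; apply: dvdn_mul.
move=> p hp; rewrite -logn_gt0 in hp.
by rewrite -(prednK hp) expnS dvdn_mulr.
Qed.

Lemma key m : 0 < m -> 149 <= omega m -> expn 256 (omega m) < m.
Proof.
move=> m0 hk.
set N := m + 860.
have mN : m < N by rewrite /N; apply: leq_addr' || (rewrite -{1}(addn0 m) ltn_add2l).
set r := index_iota 0 N.
set A := fun i => i \in primes m.
set Q := fun i : nat => i < 860.
have hf : filter A r = primes m.
  rewrite -(filter_pi_of mN); apply: eq_filter => i //.
have PSm : \prod_(i <- r | A i) i <= m.
  apply: dvdn_leq => //; rewrite -big_filter hf; exact: prod_primes_dvd.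
have hkc : omega m = count (fun i => A i && Q i) r + count (fun i => A i && ~~ Q i) r.
  by rewrite /omega -hf size_filter -!sum1_count (bigID Q).
have PL : \prod_(0 <= i < 860 | prime i) i = \prod_(i <- r | prime i && Q i) i.
  by rewrite (@big_nat_widen _ _ _ 0 860 N) // /N leq_addl.
have CL : 149 = \sum_(i <- r | prime i && Q i) 1.
  by rewrite -c1 (@big_nat_widen _ _ _ 0 860 N) // /N leq_addl.
have eqT : forall i, (prime i && Q i) && A i = A i && Q i.
  move=> i; rewrite /A; case h: (i \in primes m); last by rewrite !andbF.
  by move: h; rewrite mem_primes => /and3P [-> _ _]; rewrite andbT.
have CLs : \sum_(i <- r | prime i && Q i && A i) 1 = \sum_(i <- r | A i && Q i) 1.
  by apply: eq_bigl => i; apply: eqT.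
have PLs : \prod_(i <- r | prime i && Q i && A i) i = \prod_(i <- r | A i && Q i) i.
  by apply: eq_bigl => i; apply: eqT.
rewrite (bigID A) /= CLs !sum1_count in CL.
rewrite [RHS](bigID A) /= PLs in PL.
set cT := count (fun i => A i && Q i) r in hkc CL.
set cU := count (fun i => A i && ~~ Q i) r in hkc.
set cL := count (fun i => (prime i && Q i) && ~~ A i) r in CL.
set PT := \prod_(i <- r | A i && Q i) i in PL.
set PLn := \prod_(i <- r | (prime i && Q i) && ~~ A i) i in PL.
have hU : expn 860 cU <= \prod_(i <- r | A i && ~~ Q i) i.
  rewrite -iter_muln_1 -big_const_seq; apply: leq_prod => i /andP [_ h].
  by rewrite leqNgt.
have hLn : PLn <= expn 860 cL.
  rewrite -iter_muln_1 -big_const_seq; apply: leq_prod => i /andP [/andP [_ h] _].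
  exact: ltnW.
have cUe : cU = cL + (omega m - 149).
  move: hk; rewrite hkc CL => hk'.
  lia.
apply: leq_trans PSm.
rewrite (bigID Q) /= -/PT.
apply: (@leq_trans (PT * expn 860 cU)); last by apply: leq_mul.
rewrite cUe expnD mulnA.
apply: (@leq_trans (\prod_(0 <= i < 860 | prime i) i * expn 860 (omega m - 149))); last first.
  by rewrite PL leq_mul // leq_mul.
have -> : omega m = 149 + (omega m - 149) by rewrite subnKC.
rewrite expnD addKn.
have h1 : expn 256 (omega m - 149) <= expn 860 (omega m - 149) by elim: (omega m - 149) => // e IH; rewrite !expnS leq_mul.
apply: (@leq_trans (\prod_(0 <= i < 860 | prime i) i * expn 256 (omega m - 149))).
  by rewrite ltn_pmul2r ?expn_gt0 //; exact: c2.
by rewrite leq_mul2l h1 orbT.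
Qed.

Theorem lemma5p1 (m : nat) :
  (0 < m)%N -> (149 <= omega m)%N ->
  (INR (W m) < Rpower (INR m) (1 / 8))%R.
Proof.
move=> m0 hk.
have hm := @key m m0 hk.
have hW : Nat.pow (W m) 8 = expn 256 (omega m).
  by rewrite /W !pE -expnM mulnC expnM.
have mpos : (0 < INR m)%R by apply: lt_0_INR; apply/ltP.
have hb : (Rpower (INR m) (1/8) ^ 8 = INR m)%R.
  rewrite -Rpower_pow; last by apply: exp_pos.
  rewrite Rpower_mult.
  have -> : (1 / 8 * INR 8 = 1)%R by simpl; Lra.lra.
  by rewrite Rpower_1.
have ha : (INR (W m) ^ 8 < INR m)%R.
  by rewrite -pow_INR hW; apply: lt_INR; apply/ltP.
apply: Rnot_le_lt => hle.
have : (Rpower (INR m) (1/8) ^ 8 <= INR (W m) ^ 8)%R.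
  apply: pow_incr; split => //; apply: Rlt_le; apply: exp_pos.
rewrite hb; Lra.lra.
Qed.
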